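(* Let $\mathcal{I}$ be an interval hypergraph on $[n]$ closed under intersection. Then $P_{\mathcal{I}}$ is a lattice, and for acyclic orientations $A,B$ of $\mathcal{I}$, \[ A\vee B=\mathrm{Or}_{\sigma_A\vee\sigma_B}\quad\text{and}\quad A\wedge B=\mathrm{Or}_{\tau_A\wedge\tau_B}, \] where the joins and meets on the right are taken in the weak order on permutations of $[n]$.
   Context: An interval hypergraph $\mathcal{I}$ on $[n]$ is a collection of intervals of $[n]$ containing all singletons; it is closed under intersection if $I,J\in\mathcal{I}$, $I\cap J\ne\varnothing$ imply $I\cap J\in\mathcal{I}$. An orientation is a map $O:\mathcal{I}\to[n]$ with $O(I)\in I$; it is acyclic if there are no $H_1,\dots,H_k$, $k\ge2$, with $O(H_{i+1})\in H_i\setminus\{O(H_i)\}$ for $i\in[k-1]$ and $O(H_1)\in H_k\setminus\{O(H_k)\}$. Orientations $O\ne O'$ are related by an increasing flip (from $O$ to $O'$) if there exist $1\le i<j\le n$ such that for all $H$: if $O(H)\ne O'(H)$ then $O(H)=i$, $O'(H)=j$; and if $\{i,j\}\subseteq H$ then $O(H)=i\iff O'(H)=j$. $P_{\mathcal{I}}$ is the transitive closure of the increasing flip relation on acyclic orientations. For a permutation $\pi$ of $[n]$, $\mathrm{Or}_\pi(I)=\pi(\min\{j:\pi(j)\in I\})$; for each acyclic orientation $A$ the fiber $\{\pi:\mathrm{Or}_\pi=A\}$ is an interval $[\sigma_A,\tau_A]$ of the weak order. *)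

(* Defs.v *)
(* [n] is modelled by 'I_n = {0,...,n-1} (0-based). *)
From mathcomp Require Import all_boot all_order all_fingroup.
From Stdlib Require Import Relations.

Set Implicit Arguments.
Unset Strict Implicit.
Unset Printing Implicit Defensive.

Definition is_interval n (H : {set 'I_n}) : bool :=
  (H != set0) &&
  [forall i : 'I_n, forall j : 'I_n, forall k : 'I_n,
      [&& i \in H, k \in H, (i <= j)%N & (j <= k)%N] ==> (j \in H)].

Definition interval_hypergraph n (I : {set {set 'I_n}}) : Prop :=
  (forall H, H \in I -> is_interval H) /\ (forall x : 'I_n, [set x] \in I).

Definition closed_under_intersection n (I : {set {set 'I_n}}) : Prop :=
  forall H J, H \in I -> J \in I -> H :&: J != set0 -> H :&: J \in I.

Definition is_orientation n (I : {set {set 'I_n}}) (O : {ffun {H : {set 'I_n} | H \in I} -> 'I_n}) : Prop :=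
  forall e, O e \in val e.

Definition orient_step n (I : {set {set 'I_n}}) (O : {ffun {H : {set 'I_n} | H \in I} -> 'I_n})
  (e f : {H : {set 'I_n} | H \in I}) : bool :=
  (O f \in val e) && (O f != O e).

(* Acyclic: no H_1,...,H_k (k >= 2) with O(H_{i+1}) \in H_i \ {O(H_i)} and
   O(H_1) \in H_k \ {O(H_k)}; mathcomp's [cycle r (x :: p)] is exactly
   r x_1 x_2, ..., r x_{k-1} x_k, r x_k x_1. *)
Definition acyclic n (I : {set {set 'I_n}}) (O : {ffun {H : {set 'I_n} | H \in I} -> 'I_n}) : Prop :=
  forall s : seq {H : {set 'I_n} | H \in I}, (2 <= size s)%N -> ~~ path.cycle (orient_step O) s.

Definition acyclic_orientation n (I : {set {set 'I_n}}) (O : {ffun {H : {set 'I_n} | H \in I} -> 'I_n}) : Prop :=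
  is_orientation O /\ acyclic O.

Definition increasing_flip n (I : {set {set 'I_n}}) (O O' : {ffun {H : {set 'I_n} | H \in I} -> 'I_n}) : Prop :=
  O <> O' /\
  exists i j : 'I_n, (i < j)%N /\
    forall e : {H : {set 'I_n} | H \in I},
      (O e <> O' e -> O e = i /\ O' e = j) /\
      (i \in val e -> j \in val e -> (O e = i <-> O' e = j)).

Definition P_le n (I : {set {set 'I_n}}) : relation {ffun {H : {set 'I_n} | H \in I} -> 'I_n} :=
  clos_refl_trans _ (fun O O' => acyclic_orientation O /\ acyclic_orientation O' /\ increasing_flip O O').

(* Or_pi(H) = pi(min {j : pi(j) \in H}), written out relationally. *)
Definition is_Or n (I : {set {set 'I_n}}) (pi : 'S_n) (O : {ffun {H : {set 'I_n} | H \in I} -> 'I_n}) : Prop :=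
  forall e : {H : {set 'I_n} | H \in I},
    exists j : 'I_n, O e = pi j /\ pi j \in val e /\
      (forall k : 'I_n, pi k \in val e -> (j <= k)%N).

(* Weak order on permutations (one-line notation pi(0) ... pi(n-1)):
   inversions are the value pairs (a,b), a < b, with b occurring before a. *)
Definition inversions n (pi : 'S_n) : {set 'I_n * 'I_n} :=
  [set p : 'I_n * 'I_n | ((p.1 < p.2)%N && ((pi^-1)%g p.2 < (pi^-1)%g p.1)%N)].

Definition weak_le n (pi rho : 'S_n) : Prop := inversions pi \subset inversions rho.

Definition is_join T (le : T -> T -> Prop) (C : T -> Prop) (a b j : T) : Prop :=
  C j /\ le a j /\ le b j /\ (forall c, C c -> le a c -> le b c -> le j c).

Definition is_meet T (le : T -> T -> Prop) (C : T -> Prop) (a b m : T) : Prop :=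
  C m /\ le m a /\ le m b /\ (forall c, C c -> le c a -> le c b -> le c m).

(* Main.v *)
Require Import Defs.
From mathcomp Require Import all_boot all_order all_fingroup.
From Stdlib Require Import Relations.
From mathcomp Require Import zify.
Set Implicit Arguments. Unset Strict Implicit. Unset Printing Implicit Defensive.

Lemma connect_ind1 (T : finType) (e : rel T) (P : T -> T -> Prop) :
  (forall x, P x x) -> (forall x y z, e x y -> connect e y z -> P y z -> P x z) ->
  forall x y, connect e x y -> P x y.
Proof.
move=> H0 HS x y /connectP [p]; elim: p x => [|z p IH] x /=; first by move=> _ ->.
case/andP=> exz pz Ey; apply: (HS x z) => //; last exact: IH.
by apply/connectP; exists p.
Qed.

Definition btw (x z y : nat) := ((x <= z) && (z <= y)) || ((y <= z) && (z <= x)).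
Definition cmpd (d : bool) (u v : nat) := if d then u < v else v < u.

Definition lto n (d : bool) (r : rel 'I_n) (u v : 'I_n) : bool :=
  (u != v) && (connect r u v || (cmpd d u v && ~~ connect r v u)).

Lemma lto_trans n d (r : rel 'I_n) :
  (forall u v, connect r u v -> connect r v u -> u = v) ->
  (forall x y z : 'I_n, connect r x y -> btw x z y -> connect r x z || connect r z y) ->
  forall u v w, lto d r u v -> lto d r v w -> lto d r u w.
Proof.
move=> anti bw u v w /andP[nuv Huv] /andP[nvw Hvw].
have ctr := @connect_trans _ r.
have nuw : u != w.
  apply/eqP=> Euw; subst w.
  case/orP: Huv => [Puv|/andP[cuv nPvu]]; case/orP: Hvw => [Pvu|/andP[cvu nPuv]].
  - by move: nuv; rewrite (anti _ _ Puv Pvu) eqxx.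
  - by rewrite Puv in nPuv.
  - by rewrite Pvu in nPvu.
  - by move: cuv cvu; rewrite /cmpd; case: d => /= h1 h2; move: (ltn_trans h1 h2); rewrite ltnn.
rewrite /lto nuw /=.
case/orP: Huv => [Puv|/andP[cuv nPvu]]; case/orP: Hvw => [Pvw|/andP[cvw nPwv]].
- by rewrite (ctr _ _ _ Puv Pvw).
- have nPwu : ~~ connect r w u by apply/negP=> Pwu; rewrite (ctr _ _ _ Pwu Puv) in nPwv.
  rewrite nPwu andbT.
  case Puw: (connect r u w) => //=.
  move: cvw; rewrite /cmpd; case: d => /= cvw.
  + rewrite ltnNge leq_eqVlt negb_or eq_sym nuw /=; apply/negP=> cwu.
    have: btw u w v by rewrite /btw (ltnW cvw) (ltnW cwu) orbT.
    have := bw _ _ w Puv; move=> h /h; by rewrite Puw (negbTE nPwv).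
  + rewrite ltnNge leq_eqVlt negb_or nuw /=; apply/negP=> cwu.
    have: btw u w v by rewrite /btw (ltnW cvw) (ltnW cwu).
    have := bw _ _ w Puv; move=> h /h; by rewrite Puw (negbTE nPwv).
- have nPwu : ~~ connect r w u by apply/negP=> Pwu; rewrite (ctr _ _ _ Pvw Pwu) in nPvu.
  rewrite nPwu andbT.
  case Puw: (connect r u w) => //=.
  move: cuv; rewrite /cmpd; case: d => /= cuv.
  + rewrite ltnNge leq_eqVlt negb_or eq_sym nuw /=; apply/negP=> cwu.
    have: btw v u w by rewrite /btw (ltnW cuv) (ltnW cwu) orbT.
    have := bw _ _ u Pvw; move=> h /h; by rewrite Puw (negbTE nPvu).
  + rewrite ltnNge leq_eqVlt negb_or nuw /=; apply/negP=> cwu.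
    have: btw v u w by rewrite /btw (ltnW cuv) (ltnW cwu).
    have := bw _ _ u Pvw; move=> h /h; by rewrite Puw (negbTE nPvu).
- have cuw : cmpd d u w.
    move: cuv cvw; rewrite /cmpd; case: (d) => /=; first exact: ltn_trans.
    by move=> a b; apply: ltn_trans b a.
  rewrite cuw /=; apply/orP; right; apply/negP=> Pwu.
  have: btw w v u by move: cuv cvw; rewrite /cmpd /btw; case: (d) => /= a b; rewrite (ltnW a) (ltnW b) ?orbT.
  move=> hb; by case/orP: (bw _ _ v Pwu hb) => h; [rewrite h in nPwv | rewrite h in nPvu].
Qed.

Lemma lto_total n d (r : rel 'I_n) :
  (forall u v, connect r u v -> connect r v u -> u = v) ->
  forall u v, u != v -> lto d r u v || lto d r v u.
Proof.
move=> anti u v nuv; rewrite /lto nuv eq_sym nuv /=.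
have nuv' : (u : nat) != v by apply: contra nuv => /eqP/val_inj ->.
case: (connect r u v); case: (connect r v u) => //=; rewrite /cmpd; case: (d) => /=;
  case: ltngtP nuv' => //= ->.
Qed.

Lemma lto_irr n d (r : rel 'I_n) u : lto d r u u = false.
Proof. by rewrite /lto eqxx. Qed.

Lemma perm_of_order n (lt : rel 'I_n) :
  (forall u, lt u u = false) ->
  (forall u v w, lt u v -> lt v w -> lt u w) ->
  (forall u v, u != v -> lt u v || lt v u) ->
  exists pi : 'S_n, forall u v, ((pi^-1)%g u < (pi^-1)%g v)%N = lt u v.
Proof.
move=> irr tr tot.
pose rk x := #|[set y | lt y x]|.
have rk_lt x : rk x < n.
  rewrite /rk -[X in _ < X]card_ord -cardsT; apply: proper_card; rewrite properT.
  apply/negP=> /eqP E; have : x \in [set y | lt y x] by rewrite E inE.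
  by rewrite inE irr.
have mono x y : lt x y -> rk x < rk y.
  move=> lxy; apply: proper_card; apply/properP; split.
    by apply/subsetP=> z; rewrite !inE => lzx; apply: tr lzx lxy.
  by exists x; rewrite !inE ?irr.
pose g x := Ordinal (rk_lt x).
have ginj : injective g.
  move=> x y /(congr1 val) /= E; apply/eqP; apply: contraT => nxy.
  by case/orP: (tot _ _ nxy) => /mono; rewrite E ltnn.
exists ((perm ginj)^-1)%g => u v; rewrite invgK !permE /=.
case luv: (lt u v); first exact: mono.
case: (eqVneq u v) => [->|nuv]; first by rewrite ltnn.
have := tot _ _ nuv; rewrite luv /= => /mono h; apply/negP=> h2.
by move: (ltn_trans h h2); rewrite ltnn.
Qed.

Definition pos n (pi : 'S_n) (x : 'I_n) : nat := (pi^-1)%g x.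

Lemma pos_inj n (pi : 'S_n) u v : pos pi u = pos pi v -> u = v.
Proof. by move=> /val_inj/perm_inj. Qed.

Lemma pos_neq n (pi : 'S_n) u v : u != v -> pos pi u != pos pi v.
Proof. by apply: contra => /eqP/pos_inj ->. Qed.

Lemma weak_leP n (pi rho : 'S_n) :
  weak_le pi rho <-> (forall a b : 'I_n, a < b -> pos pi b < pos pi a -> pos rho b < pos rho a).
Proof.
split.
  move=> /subsetP H a b ab ba; have := H (a, b); rewrite !inE /= ab ba /=.
  by move=> /(_ isT).
move=> H; apply/subsetP=> [[a b]]; rewrite !inE /= => /andP[ab ba].
by rewrite ab (H _ _ ab ba).
Qed.

Lemma weak_le_refl n (pi : 'S_n) : weak_le pi pi.
Proof. exact: subxx. Qed.

Lemma weak_le_trans n (p q r : 'S_n) : weak_le p q -> weak_le q r -> weak_le p r.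
Proof. exact: subset_trans. Qed.

Lemma btw_split (x z w y : nat) : btw x z w -> btw x z y || btw y z w.
Proof. rewrite /btw; lia. Qed.

Lemma bw_lift n (r : rel 'I_n) :
  (forall x y z : 'I_n, r x y -> btw x z y -> connect r x z || connect r z y) ->
  forall x y z : 'I_n, connect r x y -> btw x z y -> connect r x z || connect r z y.
Proof.
move=> H x y z cxy; move: z; pattern x, y.
apply: (connect_ind1 _ _ cxy).
  move=> a z hb; have -> : z = a.
    by apply/val_inj/eqP; rewrite /= eqn_leq; move: hb; rewrite /btw; case/orP=> /andP[-> ->].
  by rewrite connect0.
move=> a b c rab cbc IH z /(btw_split b) /orP[h|h].
  case/orP: (H _ _ _ rab h) => [->//|h2]; by rewrite (connect_trans h2 cbc) orbT.
case/orP: (IH _ h) => [h2|->]; last by rewrite orbT.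
by rewrite (connect_trans (connect1 rab) h2).
Qed.

Definition rjoin n (p1 p2 : 'S_n) (u v : 'I_n) : bool :=
  (v < u) && ((pos p1 u < pos p1 v) || (pos p2 u < pos p2 v)).
Definition rmeet n (p1 p2 : 'S_n) (u v : 'I_n) : bool :=
  (u < v) && ((pos p1 u < pos p1 v) || (pos p2 u < pos p2 v)).

Lemma rjoin_mono n (p1 p2 : 'S_n) u v : connect (rjoin p1 p2) u v -> v <= u.
Proof.
move=> c; pattern u, v; apply: (connect_ind1 _ _ c) => // x y z /andP[yx _] _ zy.
exact: leq_trans zy (ltnW yx).
Qed.

Lemma rmeet_mono n (p1 p2 : 'S_n) u v : connect (rmeet p1 p2) u v -> u <= v.
Proof.
move=> c; pattern u, v; apply: (connect_ind1 _ _ c) => // x y z /andP[xy _] _ yz.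
exact: leq_trans (ltnW xy) yz.
Qed.

Lemma step_bw n (p : 'S_n) (r : rel 'I_n) (x y z : 'I_n) :
  (forall u v, pos p u < pos p v -> (v < u) = (y < x) -> r u v) ->
  y != x -> pos p x < pos p y -> btw x z y -> connect r x z || connect r z y.
Proof.
move=> Hr nyx pxy hb.
case: (eqVneq z x) => [->|nzx]; first by rewrite connect0.
case: (eqVneq z y) => [->|nzy]; first by rewrite connect0 orbT.
have hz : (y < z < x) || (x < z < y).
  have n1 : (z : nat) != x by apply: contra nzx => /eqP/val_inj ->.
  have n2 : (z : nat) != y by apply: contra nzy => /eqP/val_inj ->.
  have n3 : (y : nat) != x by apply: contra nyx => /eqP/val_inj ->.
  move: hb n1 n2 n3; rewrite /btw; lia.
case: (ltngtP (pos p x) (pos p z)) => [xz|zx|/pos_inj E]; last by rewrite E eqxx in nzx.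
  apply/orP; left; apply: connect1; apply: Hr => //; move: hz; lia.
apply/orP; right; apply: connect1; apply: Hr; first exact: ltn_trans zx pxy.
move: hz; lia.
Qed.

Lemma rjoin_bw n (p1 p2 : 'S_n) (x y z : 'I_n) :
  connect (rjoin p1 p2) x y -> btw x z y ->
  connect (rjoin p1 p2) x z || connect (rjoin p1 p2) z y.
Proof.
apply: bw_lift => {}x {}y {}z /andP[yx /orP[h|h]] hb.
  apply: (step_bw (p:=p1)) hb => //; last by rewrite neq_ltn yx.
  by move=> u v puv; rewrite yx /rjoin puv => ->.
apply: (step_bw (p:=p2)) hb => //; last by rewrite neq_ltn yx.
by move=> u v puv; rewrite yx /rjoin puv orbT => ->.
Qed.

Lemma rmeet_bw n (p1 p2 : 'S_n) (x y z : 'I_n) :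
  connect (rmeet p1 p2) x y -> btw x z y ->
  connect (rmeet p1 p2) x z || connect (rmeet p1 p2) z y.
Proof.
apply: bw_lift => {}x {}y {}z /andP[xy /orP[h|h]] hb;
  have yx : (y < x) = false by rewrite ltnNge (ltnW xy).
  apply: (step_bw (p:=p1)) hb => //; last by rewrite neq_ltn xy orbT.
  move=> u v puv; rewrite yx /= /rmeet puv andbT => /negbT.
  rewrite -leqNgt leq_eqVlt => /orP[/eqP/val_inj E|//]; by rewrite E ltnn in puv.
apply: (step_bw (p:=p2)) hb => //; last by rewrite neq_ltn xy orbT.
move=> u v puv; rewrite yx /= /rmeet puv orbT andbT => /negbT.
rewrite -leqNgt leq_eqVlt => /orP[/eqP/val_inj E|//]; by rewrite E ltnn in puv.
Qed.

Lemma wjoin_ex n (p1 p2 : 'S_n) : exists rho, is_join (@weak_le n) (fun _ => True) p1 p2 rho.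
Proof.
set r := rjoin p1 p2.
have anti u v : connect r u v -> connect r v u -> u = v.
  by move=> /rjoin_mono h1 /rjoin_mono h2; apply: val_inj; apply/eqP; rewrite eqn_leq h1 h2.
have [rho Hrho] := perm_of_order (lto_irr true r) (lto_trans anti (@rjoin_bw n p1 p2)) (lto_total true anti).
exists rho; split=> //.
have up p : (p = p1 \/ p = p2) -> weak_le p rho.
  move=> hp; apply/weak_leP => a b ab ba; rewrite /pos Hrho /lto.
  have nba : b != a by rewrite neq_ltn ab orbT.
  rewrite nba /=; apply/orP; left; apply: connect1; rewrite /r /rjoin ab /=.
  by case: hp => E; rewrite -E ba ?orbT.
split; first by apply: up; left.
split; first by apply: up; right.
move=> c _ h1 h2; apply/weak_leP => a b ab; rewrite /pos Hrho /lto => /andP[nba].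
have nab : ~~ (b < a) by rewrite -leqNgt ltnW.
rewrite /cmpd (negbTE nab) /= orbF => cba.
have: pos c b <= pos c a.
  pattern b, a; apply: (connect_ind1 _ _ cba) => // x y z /andP[yx hxy] _ yz.
  apply: leq_trans yz; case/orP: hxy => h.
    by move/weak_leP: h1 => /(_ _ _ yx h) /ltnW.
  by move/weak_leP: h2 => /(_ _ _ yx h) /ltnW.
by rewrite leq_eqVlt => /orP[/eqP/pos_inj E|//]; rewrite E eqxx in nba.
Qed.

Lemma wmeet_ex n (p1 p2 : 'S_n) : exists rho, is_meet (@weak_le n) (fun _ => True) p1 p2 rho.
Proof.
set r := rmeet p1 p2.
have anti u v : connect r u v -> connect r v u -> u = v.
  by move=> /rmeet_mono h1 /rmeet_mono h2; apply: val_inj; apply/eqP; rewrite eqn_leq h1 h2.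
have [rho Hrho] := perm_of_order (lto_irr false r) (lto_trans anti (@rmeet_bw n p1 p2)) (lto_total false anti).
have key (a b : 'I_n) : a < b -> pos rho b < pos rho a -> ~~ connect r a b.
  rewrite /pos Hrho /lto => ab /andP[_ /orP[cba|/andP[_ //]]].
  by have := rmeet_mono cba; rewrite leqNgt ab.
exists rho; split=> //.
have dn p : (p = p1 \/ p = p2) -> weak_le rho p.
  move=> hp; apply/weak_leP => a b ab ba; have := key _ _ ab ba.
  case: (ltngtP (pos p b) (pos p a)) => // [h|/pos_inj E]; last by rewrite E ltnn in ab.
  move/negP; case; apply: connect1; rewrite /r /rmeet ab /=.
  by case: hp => E; rewrite -E h ?orbT.
split; first by apply: dn; left.
split; first by apply: dn; right.
move=> c _ h1 h2; apply/weak_leP => a b ab cba.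
rewrite /pos Hrho /lto.
have nba : b != a by rewrite neq_ltn ab orbT.
rewrite nba /cmpd ab /=; apply/orP; right; apply/negP => cab.
suff : pos c a <= pos c b by rewrite leqNgt cba.
pattern a, b; apply: (connect_ind1 _ _ cab) => // x y z /andP[xy hxy] _ yz.
apply: leq_trans yz; rewrite leqNgt; apply/negP => yx.
case/orP: hxy => h.
  by move/weak_leP: h1 => /(_ _ _ xy yx); rewrite ltnNge (ltnW h).
by move/weak_leP: h2 => /(_ _ _ xy yx); rewrite ltnNge (ltnW h).
Qed.

Notation edge n I := {H : {set 'I_n} | H \in I}.
Notation ori n I := {ffun {H : {set 'I_n} | H \in I} -> 'I_n}.

Definition vstep n (I : {set {set 'I_n}}) (O : ori n I) (x y : 'I_n) : bool :=
  [exists e, (O e == x) && (y \in val e) && (y != x)].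

Lemma vstepP n (I : {set {set 'I_n}}) (O : ori n I) x y :
  reflect (exists e, [/\ O e = x, y \in val e & y != x]) (vstep O x y).
Proof.
apply: (iffP existsP) => [[e /andP[/andP[/eqP h1 h2] h3]]|[e [h1 h2 h3]]]; exists e => //.
by rewrite h1 eqxx h2 h3.
Qed.

Lemma interval_btw n (H : {set 'I_n}) (i j k : 'I_n) :
  is_interval H -> i \in H -> k \in H -> btw i j k -> j \in H.
Proof.
case/andP=> _ /forallP H1 hi hk /orP[/andP[a b]|/andP[a b]].
  by have := H1 i => /forallP /(_ j) /forallP /(_ k); rewrite hi hk a b.
by have := H1 k => /forallP /(_ j) /forallP /(_ i); rewrite hi hk a b.
Qed.

Lemma edge_interval n (I : {set {set 'I_n}}) (e : edge n I) :
  interval_hypergraph I -> is_interval (val e).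
Proof. by case=> h _; apply: h; exact: valP. Qed.

Lemma reach_btw n (I : {set {set 'I_n}}) (O : ori n I) (x y z : 'I_n) :
  interval_hypergraph I -> is_orientation O ->
  connect (vstep O) x y -> btw x z y -> connect (vstep O) x z.
Proof.
move=> hI hO cxy; move: z; pattern x, y; apply: (connect_ind1 _ _ cxy).
  move=> a z hb; have -> : z = a; last by rewrite connect0.
  by apply/val_inj/eqP; rewrite /= eqn_leq; move: hb; rewrite /btw; case/orP=> /andP[-> ->].
move=> a b c /vstepP[e [Ea be nba]] cbc IH z /(btw_split b) /orP[h|h].
  have ze : z \in val e.
    by apply: (interval_btw (edge_interval e hI) _ be h); rewrite -Ea; apply: hO.
  case: (eqVneq z a) => [->|nza]; first by rewrite connect0.
  by apply: connect1; apply/vstepP; exists e.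
apply: connect_trans (IH _ h); apply: connect1; apply/vstepP; by exists e.
Qed.

Lemma walk n (I : {set {set 'I_n}}) (O : ori n I) (p : seq 'I_n) (x : 'I_n) :
  path (vstep O) x p -> p != [::] ->
  exists e0 s, [/\ O e0 = x, path (orient_step O) e0 s, last x p \in val (last e0 s),
                   last x p != O (last e0 s) & size s = (size p).-1].
Proof.
elim: p x => [//|v p IH] x /= /andP[/vstepP[e [Ee ve nvx]] pv] _.
case: (eqVneq p [::]) => [->|np].
  by exists e, [::]; split => //=; rewrite Ee.
have [e1 [s1 [E1 P1 L1 N1 S1]]] := IH _ pv np.
exists e, (e1 :: s1); split => //=.
  by rewrite P1 andbT /orient_step E1 Ee ve nvx.
by rewrite S1; case: p np {IH pv L1 N1 S1}.
Qed.

Lemma reach_anti n (I : {set {set 'I_n}}) (O : ori n I) (x y : 'I_n) :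
  acyclic O -> connect (vstep O) x y -> connect (vstep O) y x -> x = y.
Proof.
move=> hA /connectP[p1 pp1 L1] /connectP[p2 pp2 L2].
apply/eqP; apply: contraT => nxy.
have n1 : p1 != [::] by apply: contra nxy => /eqP E; rewrite L1 E.
have n2 : p2 != [::] by apply: contra nxy => /eqP E; rewrite L2 E.
have pp : path (vstep O) x (p1 ++ p2) by rewrite cat_path pp1 -L1 pp2.
have np : p1 ++ p2 != [::] by case: (p1) n1.
have [e0 [s [E0 Ps Ls Ns Ss]]] := walk pp np.
have Lx : last x (p1 ++ p2) = x by rewrite last_cat -L1.
rewrite Lx in Ls Ns.
have := hA (e0 :: s); rewrite /= Ss size_cat.
have -> : (1 < (size p1 + size p2).-1.+1) by case: (p1) n1; case: (p2) n2 => //= *; rewrite addnS.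
move=> /(_ isT); rewrite rcons_path Ps /= /orient_step E0 Ls Ns.
by [].
Qed.

Lemma two_cycle n (I : {set {set 'I_n}}) (O : ori n I) (e f : edge n I) :
  acyclic O -> is_orientation O -> val f \subset val e -> O e \in val f -> O f = O e.
Proof.
move=> hA hO sfe oef; apply/eqP; apply: contraT => nfe.
have := hA [:: e; f] isT; rewrite /= /orient_step oef (subsetP sfe _ (hO f)) nfe eq_sym nfe.
by [].
Qed.

Definition btws (x z y : nat) := (x < z < y) || (y < z < x).

Lemma reach_dec n (I : {set {set 'I_n}}) (O : ori n I) (x y : 'I_n) :
  interval_hypergraph I -> acyclic_orientation O ->
  connect (vstep O) x y -> x != y ->
  (exists e, O e = x /\ y \in val e) \/ (exists v : 'I_n, btws x v y /\ connect (vstep O) v y /\ v != y).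
Proof.
move=> hI [hO hA] /connectP[[|v p] /= pp Ly] nxy; first by rewrite Ly eqxx in nxy.
case/andP: pp => /vstepP[e [Ee ve nvx]] pv.
have cvy : connect (vstep O) v y by apply/connectP; exists p.
case: (eqVneq v y) => [Evy|nvy]; first by left; exists e; rewrite -Evy.
have n1 : (v : nat) != x by apply: contra nvx => /eqP/val_inj ->.
have n2 : (v : nat) != y by apply: contra nvy => /eqP/val_inj ->.
have n3 : (x : nat) != y by apply: contra nxy => /eqP/val_inj ->.
have [h|h] : btws x v y \/ (btw x y v \/ btw v x y).
- move: n1 n2 n3; rewrite /btws /btw; lia.
- by right; exists v.
case: h => h.
  left; exists e; split => //; apply: (interval_btw (edge_interval e hI) _ ve h).
  by rewrite -Ee; apply: hO.
have cvx : connect (vstep O) v x by apply: reach_btw hO cvy h.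
have cxv : connect (vstep O) x v by apply: connect1; apply/vstepP; exists e.
by have := reach_anti hA cxv cvx => E; rewrite E eqxx in nvx.
Qed.

Lemma claimK n (I : {set {set 'I_n}}) (A C : ori n I) :
  interval_hypergraph I -> closed_under_intersection I ->
  acyclic_orientation A -> acyclic_orientation C -> (forall e, A e <= C e) ->
  forall a b : 'I_n, a < b -> connect (vstep A) b a -> connect (vstep C) a b -> False.
Proof.
move=> hI hC hA hC' hle a b.
have main : forall k (a b : 'I_n), b - a < k -> a < b ->
    connect (vstep A) b a -> connect (vstep C) a b -> False.
  elim=> [//|k IH] {}a {}b hk ab rA rC.
  have nba : b != a by rewrite neq_ltn ab orbT.
  have nab : a != b by rewrite eq_sym.
  case: (reach_dec hI hA rA nba) => [[eA [EA aeA]]|[v [hv [rva nva]]]].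
    case: (reach_dec hI hC' rC nab) => [[eC [EC beC]]|[u [hu [rub nub]]]].
      have aeC : a \in val eC by rewrite -EC; apply: hC'.1.
      have beA : b \in val eA by rewrite -EA; apply: hA.1.
      have hK : val eA :&: val eC \in I.
        by apply: hC; try exact: valP; apply/set0Pn; exists a; rewrite inE aeA aeC.
      pose fK : edge n I := exist (fun H => H \in I) _ hK.
      have s1 : val fK \subset val eA by apply: subsetIl.
      have s2 : val fK \subset val eC by apply: subsetIr.
      have h1 := two_cycle hA.2 hA.1 s1; rewrite EA /= inE beA beC in h1.
      have h2 := two_cycle hC'.2 hC'.1 s2; rewrite EC /= inE aeA aeC in h2.
      have := hle fK; rewrite h1 // h2 // leqNgt ab; by [].
    have au : a < u < b.
      by move: hu; rewrite /btws; lia.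
    have rAu : connect (vstep A) b u by apply: (reach_btw hI hA.1 rA); rewrite /btw; lia.
    apply: (IH u b) => //; [lia | lia].
  have av : a < v < b by move: hv; rewrite /btws; lia.
  have rCv : connect (vstep C) a v by apply: (reach_btw hI hC'.1 rC); rewrite /btw; lia.
  apply: (IH a v) => //; [lia | lia].
by move=> ab; apply: (main (b - a).+1).
Qed.

Lemma is_OrP n (I : {set {set 'I_n}}) (pi : 'S_n) (O : ori n I) :
  is_Or pi O <-> (forall e, O e \in val e /\ forall y, y \in val e -> pos pi (O e) <= pos pi y).
Proof.
split.
  move=> H e; have [j [E1 [E2 E3]]] := H e; split; first by rewrite E1.
  by move=> y ye; rewrite E1 /pos permK; apply: E3; rewrite permKV.
move=> H e; have [h1 h2] := H e; exists ((pi^-1)%g (O e)); rewrite permKV; split => //; split => // k hk.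
by have := h2 _ hk; rewrite /pos permK.
Qed.

Definition Orf n (I : {set {set 'I_n}}) (O0 : ori n I) (pi : 'S_n) : ori n I :=
  [ffun e => [arg min_(x < O0 e in val e) pos pi x]].

Lemma is_Or_Orf n (I : {set {set 'I_n}}) (O0 : ori n I) (pi : 'S_n) :
  is_orientation O0 -> is_Or pi (Orf O0 pi).
Proof.
move=> h0; apply/is_OrP => e; rewrite ffunE.
by case: arg_minnP => [|x xe H]; [exact: h0 | split].
Qed.

Lemma is_Or_uniq n (I : {set {set 'I_n}}) (pi : 'S_n) (O O' : ori n I) :
  is_Or pi O -> is_Or pi O' -> O = O'.
Proof.
move=> /is_OrP H /is_OrP H'; apply/ffunP => e.
have [a1 a2] := H e; have [b1 b2] := H' e.
apply: (@pos_inj _ pi); apply/eqP; rewrite eqn_leq a2 // b2 //.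
Qed.

Lemma Or_orientation n (I : {set {set 'I_n}}) (pi : 'S_n) (O : ori n I) :
  is_Or pi O -> is_orientation O.
Proof. by move=> /is_OrP H e; case: (H e). Qed.

Lemma Or_acyclic n (I : {set {set 'I_n}}) (pi : 'S_n) (O : ori n I) :
  is_Or pi O -> acyclic_orientation O.
Proof.
move=> hO; split; first exact: Or_orientation hO.
move/is_OrP: hO => H; rewrite /acyclic; case=> [//|x s] _; apply/negP => /=.
set lt := fun e f : edge n I => pos pi (O e) < pos pi (O f).
have sub : subrel (orient_step O) lt.
  move=> e f /andP[fe nfe]; rewrite /lt; have [_ h] := H e.
  by rewrite ltn_neqAle h // andbT; apply: pos_neq; rewrite eq_sym.
move=> /(sub_path sub) /(order_path_min (fun a b c => @ltn_trans _ _ _)) /allP.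
by move=> /(_ x); rewrite mem_rcons inE eqxx /lt ltnn => /(_ isT).
Qed.

Lemma P_le_pointwise n (I : {set {set 'I_n}}) (A B : ori n I) :
  P_le A B -> forall e, A e <= B e.
Proof.
elim=> [x y [_ [_ [_ [i [j [ij H]]]]]] e|x|x y z _ h1 _ h2 e] //.
  case: (eqVneq (x e) (y e)) => [->//|ne].
  by have [h _] := H e; have [-> ->] := h (elimN eqP ne); apply: ltnW.
exact: leq_trans (h1 e) (h2 e).
Qed.

Lemma lin_ext n (I : {set {set 'I_n}}) (pi : 'S_n) (O : ori n I) :
  is_orientation O ->
  (forall (e : edge n I) y, y \in val e -> y != O e -> pos pi (O e) < pos pi y) -> is_Or pi O.
Proof.
move=> hO H; apply/is_OrP => e; split => // y ye.
case: (eqVneq y (O e)) => [->//|ne]; exact: ltnW (H _ _ ye ne).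
Qed.

Lemma sigma_ex n (I : {set {set 'I_n}}) (A : ori n I) :
  interval_hypergraph I -> acyclic_orientation A ->
  exists s : 'S_n, is_Or s A /\
    (forall a b : 'I_n, a < b -> pos s b < pos s a -> connect (vstep A) b a).
Proof.
move=> hI [hO hA].
set r := vstep A.
have anti : forall u v, connect r u v -> connect r v u -> u = v by move=> u v; apply: reach_anti.
have bw : forall x y z : 'I_n, connect r x y -> btw x z y -> connect r x z || connect r z y.
  by move=> x y z c b; rewrite (reach_btw hI hO c b).
have [s Hs] := perm_of_order (lto_irr true r) (lto_trans anti bw) (lto_total true anti).
exists s; split.
  apply: lin_ext => // e y ye ne; rewrite /pos Hs /lto eq_sym ne /=.
  by apply/orP; left; apply: connect1; apply/vstepP; exists e.
move=> a b ab; rewrite /pos Hs /lto /cmpd => /andP[_ /orP[//|/andP[ba _]]].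
by have := ltn_trans ab ba; rewrite ltnn.
Qed.

Lemma tau_ex n (I : {set {set 'I_n}}) (A : ori n I) :
  interval_hypergraph I -> acyclic_orientation A ->
  exists t : 'S_n, is_Or t A /\
    (forall a b : 'I_n, a < b -> ~~ connect (vstep A) a b -> pos t b < pos t a).
Proof.
move=> hI [hO hA].
set r := vstep A.
have anti : forall u v, connect r u v -> connect r v u -> u = v by move=> u v; apply: reach_anti.
have bw : forall x y z : 'I_n, connect r x y -> btw x z y -> connect r x z || connect r z y.
  by move=> x y z c b; rewrite (reach_btw hI hO c b).
have [s Hs] := perm_of_order (lto_irr false r) (lto_trans anti bw) (lto_total false anti).
exists s; split.
  apply: lin_ext => // e y ye ne; rewrite /pos Hs /lto eq_sym ne /=.
  by apply/orP; left; apply: connect1; apply/vstepP; exists e.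
move=> a b ab nc; rewrite /pos Hs /lto /cmpd ab nc /= orbT andbT.
by rewrite neq_ltn ab orbT.
Qed.

Lemma descent (g : nat -> nat) p q : p < q -> g q < g p -> exists k, p <= k < q /\ g k.+1 < g k.
Proof.
elim: q => [//|q IH] pq gq.
case: (ltnP (g q.+1) (g q)) => h; first by exists q; rewrite ltnS in pq; rewrite pq ltnSn.
have gq' : g q < g p by exact: leq_ltn_trans h gq.
rewrite ltnS leq_eqVlt in pq; case/orP: pq => [/eqP E|pq]; first by rewrite E ltnn in gq'.
have [k [/andP[k1 k2] k3]] := IH pq gq'; exists k; split => //; lia.
Qed.

Lemma weak_same n (pi rho : 'S_n) :
  weak_le pi rho -> weak_le rho pi -> forall u v, (pos pi u < pos pi v) = (pos rho u < pos rho v).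
Proof.
move=> /weak_leP h1 /weak_leP h2 u v.
case: (ltngtP (val u) (val v)) => [uv|vu|/val_inj ->]; last by rewrite !ltnn.
- case: (ltngtP (pos pi u) (pos pi v)) => [a|b|/pos_inj E]; last by rewrite E ltnn in uv.
  + by case: (ltngtP (pos rho u) (pos rho v)) => // [c|/pos_inj E]; [have := h2 _ _ uv c; rewrite ltnNge (ltnW a) | rewrite E ltnn in uv].
  + by have := h1 _ _ uv b => c; rewrite ltnNge (ltnW c).
- case: (ltngtP (pos pi u) (pos pi v)) => [a|b|/pos_inj E]; last by rewrite E ltnn in vu.
  + by have := h1 _ _ vu a.
  + case: (ltngtP (pos rho u) (pos rho v)) => // c; have := h2 _ _ vu c.
    by rewrite ltnNge (ltnW b).
Qed.

Lemma Or_same n (I : {set {set 'I_n}}) (pi rho : 'S_n) (O : ori n I) :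
  (forall u v, (pos pi u < pos pi v) = (pos rho u < pos rho v)) -> is_Or pi O -> is_Or rho O.
Proof.
move=> S /is_OrP H; apply/is_OrP => e; have [h1 h2] := H e; split => // y ye.
by rewrite leqNgt -S -leqNgt h2.
Qed.

Lemma adjacent n (pi rho : 'S_n) :
  weak_le pi rho -> ~ weak_le rho pi ->
  exists a b : 'I_n, [/\ a < b, pos pi b = (pos pi a).+1 & pos rho b < pos rho a].
Proof.
move=> h1 h2.
have [c [d [cd rdc pcd]]] : exists c d : 'I_n, [/\ c < d, pos rho d < pos rho c & pos pi c < pos pi d].
  have : ~~ (inversions rho \subset inversions pi) by apply/negP.
  case/subsetPn => [[c d]]; rewrite !inE /= => /andP[cd rdc] nin.
  exists c, d; split => //; rewrite cd /= -leqNgt in nin.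
  rewrite ltn_neqAle nin andbT; apply: pos_neq; by rewrite neq_ltn cd.
set g := fun k => pos rho (pi (insubd c k)).
have lt_n : forall x : 'I_n, (pos pi x < n)%N by move=> x; exact: ltn_ord.
have gE : forall x, g (pos pi x) = pos rho x.
  by move=> x; rewrite /g /pos (_ : insubd c _ = (pi^-1)%g x) ?permKV //; apply: val_inj; rewrite val_insubd ltn_ord.
have gdc : g (pos pi d) < g (pos pi c) by rewrite !gE.
have [k [/andP[k1 k2] k3]] := descent pcd gdc.
have kn : k.+1 < n by apply: leq_ltn_trans k2 (lt_n d).
set x : 'I_n := pi (insubd c k); set y : 'I_n := pi (insubd c k.+1).
have px : pos pi x = k by rewrite /x /pos permK val_insubd (ltnW kn).
have py : pos pi y = k.+1 by rewrite /y /pos permK val_insubd kn.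
have gx : g k = pos rho x by [].
have gy : g k.+1 = pos rho y by [].
rewrite gx gy in k3.
case: (ltngtP (val x) (val y)) => [xy|yx|/val_inj E].
- by exists x, y; split => //; rewrite px py.
- move/weak_leP: h1 => /(_ _ _ yx); rewrite px py ltnSn => /(_ isT) h.
  by have := ltn_trans h k3; rewrite ltnn.
- by move: py; rewrite -E px; lia.
Qed.

Lemma swap_perm n (pi : 'S_n) (a b : 'I_n) :
  exists pi' : 'S_n, forall x, pos pi' x = pos pi (tperm a b x).
Proof.
by exists ((tperm a b * pi^-1)^-1)%g => x; rewrite /pos invgK permM.
Qed.

Lemma flip_core n (I : {set {set 'I_n}}) (pi pi' : 'S_n) (O O' : ori n I) (a b : 'I_n) :
  pos pi b = (pos pi a).+1 -> (forall x, pos pi' x = pos pi (tperm a b x)) ->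
  is_Or pi O -> is_Or pi' O' ->
  forall e, (O e <> O' e -> O e = a /\ O' e = b) /\
            (a \in val e -> b \in val e -> (O e = a <-> O' e = b)).
Proof.
move=> hab hp /is_OrP H /is_OrP H' e.
have [o1 o2] := H e; have [o1' o2'] := H' e.
have nab : a != b by apply/negP => /eqP E; move: hab; rewrite E; lia.
have pa' : pos pi' a = pos pi b by rewrite hp tpermL.
have pb' : pos pi' b = pos pi a by rewrite hp tpermR.
have po' : forall y, y != a -> y != b -> pos pi' y = pos pi y by move=> y ya yb; rewrite hp tpermD // eq_sym.
have ne y z : y != z -> pos pi y != pos pi z by apply: pos_neq.
have same : (forall y, y \in val e -> pos pi' (O e) <= pos pi' y) -> O' e = O e.
  move=> m; apply: (@pos_inj _ pi'); apply/eqP; rewrite eqn_leq m // o2' //.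
have i1 : O e != a -> O' e = O e.
  move=> nOa; apply: same => y ye.
  case: (eqVneq (O e) b) => [Ob|nOb].
    have ae : a \notin val e.
      apply/negP => ae; have := o2 _ ae; rewrite Ob hab ltnNge leqnn; by [].
    rewrite Ob pb'; case: (eqVneq y b) => [->|nyb]; first by rewrite pb'.
    have nya : y != a by apply: contraNneq ae => <-.
    rewrite po' //; have := o2 _ ye; rewrite Ob hab => h; exact: ltnW.
  rewrite po' //; case: (eqVneq y a) => [Ey|nya]; first by rewrite Ey pa' hab; apply: leqW; apply: o2; rewrite -Ey.
  case: (eqVneq y b) => [Ey|nyb]; last by rewrite po' // o2.
  rewrite Ey pb'; have := o2 _ ye; rewrite Ey.
  have := ne _ _ nOa; have := ne _ _ nOb; rewrite hab; lia.
have i2 : O e = a -> b \notin val e -> O' e = a.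
  move=> Oa nbe; rewrite -Oa; apply: same => y ye; rewrite Oa pa'.
  case: (eqVneq y a) => [->|nya]; first by rewrite pa'.
  have nyb : y != b by apply: contraNneq nbe => <-.
  rewrite po' //; have := o2 _ ye; rewrite Oa => h.
  have := ne _ _ nya; have := ne _ _ nyb; rewrite hab; lia.
have i3 : O e = a -> b \in val e -> O' e = b.
  move=> Oa be; apply: (@pos_inj _ pi'); apply/eqP; rewrite eqn_leq o2' //= pb'.
  case: (eqVneq (O' e) a) => [->|nya]; first by rewrite pa' hab.
  case: (eqVneq (O' e) b) => [->|nyb]; first by rewrite pb'.
  by rewrite po' // -Oa o2.
split.
  move=> d; case: (eqVneq (O e) a) => [Oa|nOa]; last by have := i1 nOa => E; rewrite E in d.
  split => //; case: (boolP (b \in val e)) => [be|nbe]; first exact: i3.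
  by have := i2 Oa nbe => E; rewrite E Oa in d.
move=> ae be; split; first by move=> Oa; exact: i3.
move=> Ob; case: (eqVneq (O e) a) => [//|nOa].
have := i1 nOa; rewrite Ob => E.
have := o2 _ ae; rewrite -E hab ltnNge leqnn; by [].
Qed.

Lemma swap_order n (pi pi' : 'S_n) (a b : 'I_n) :
  pos pi b = (pos pi a).+1 -> (forall x, pos pi' x = pos pi (tperm a b x)) ->
  forall u v, ~ (u = a /\ v = b) -> ~ (u = b /\ v = a) ->
  (pos pi' u < pos pi' v) = (pos pi u < pos pi v).
Proof.
move=> hab hp u v h1 h2; rewrite !hp.
have ne y z : y != z -> pos pi y != pos pi z by apply: pos_neq.
case: (eqVneq u v) => [->|nuv]; first by rewrite !ltnn.
have := ne _ _ nuv.
case: tpermP => [Eu|Eu|nua nub]; case: tpermP => [Ev|Ev|nva nvb]; subst.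
- by rewrite eqxx.
- by case: h1.
- by rewrite hab; have := ne _ _ (introN eqP nva); have := ne _ _ (introN eqP nvb); rewrite hab; lia.
- by case: h2.
- by rewrite eqxx.
- by rewrite hab; have := ne _ _ (introN eqP nva); have := ne _ _ (introN eqP nvb); rewrite hab; lia.
- by rewrite hab; have := ne _ _ (introN eqP nua); have := ne _ _ (introN eqP nub); rewrite hab; lia.
- by rewrite hab; have := ne _ _ (introN eqP nua); have := ne _ _ (introN eqP nub); rewrite hab; lia.
- by [].
Qed.

Lemma Or_mono n (I : {set {set 'I_n}}) (O0 : ori n I) (pi rho : 'S_n) :
  is_orientation O0 -> weak_le pi rho -> P_le (Orf O0 pi) (Orf O0 rho).
Proof.
move=> h0.
suff main : forall k (pi : 'S_n), #|inversions rho :\: inversions pi| < k ->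
    weak_le pi rho -> P_le (Orf O0 pi) (Orf O0 rho) by apply: main.
elim=> [//|k IH] {}pi hk hle.
case: (boolP (inversions rho \subset inversions pi)) => [hge|hnge].
  have E : Orf O0 pi = Orf O0 rho.
    apply: is_Or_uniq (is_Or_Orf _ h0).
    by apply: Or_same (is_Or_Orf _ h0); apply: weak_same.
  by rewrite E; apply: rt_refl.
have [a [b [ab hab rba]]] := adjacent hle (fun h => negP hnge h).
have [pi' hp] := swap_perm pi a b.
have nab : a != b by rewrite neq_ltn ab.
have so := swap_order hab hp.
have pa' : pos pi' a = pos pi b by rewrite hp tpermL.
have pb' : pos pi' b = pos pi a by rewrite hp tpermR.
have h1 : weak_le pi pi'.
  apply/weak_leP => c d cd pdc.
  have nd1 : ~ (d = a /\ c = b) by case=> Ed Ec; move: cd; rewrite Ed Ec; lia.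
  case: (boolP ((c == a) && (d == b))) => [/andP[/eqP Ec /eqP Ed]|hn].
    by move: pdc; rewrite Ec Ed hab; lia.
  rewrite so //; case=> /eqP Ec /eqP Ed; by rewrite Ec Ed in hn.
have h2 : weak_le pi' rho.
  apply/weak_leP => c d cd pdc.
  case: (boolP ((c == a) && (d == b))) => [/andP[/eqP Ec /eqP Ed]|hn].
    by rewrite Ec Ed.
  have nd1 : ~ (d = a /\ c = b) by case=> Ed Ec; move: cd; rewrite Ed Ec; lia.
  move/weak_leP: hle; apply => //; rewrite -so //.
  case=> Ed Ec; by rewrite Ec Ed !eqxx in hn.
have hk' : #|inversions rho :\: inversions pi'| < k.
  rewrite -ltnS; apply: leq_trans hk; apply: proper_card; apply/properP; split.
    apply/subsetP => x; rewrite !in_setD => /andP[nx ->]; rewrite andbT.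
    by apply: contra nx; move: h1; rewrite /weak_le => /subsetP; apply.
  exists (a, b); rewrite !inE /= ab rba /=.
    by rewrite andbT -leqNgt; move: hab; rewrite /pos => ->.
  by rewrite andbT negbK; move: pa' pb' hab; rewrite /pos => -> -> ->.
apply: rt_trans (IH _ hk' h2).
case: (eqVneq (Orf O0 pi) (Orf O0 pi')) => [->|ne]; first exact: rt_refl.
apply: rt_step; split; first exact: Or_acyclic (is_Or_Orf _ h0).
split; first exact: Or_acyclic (is_Or_Orf _ h0).
split; first by apply/eqP.
exists a, b; split => // e.
exact: flip_core hab hp (is_Or_Orf _ h0) (is_Or_Orf _ h0) e.
Qed.

Lemma join_main n (I : {set {set 'I_n}}) (A B : ori n I) (sA sB rho : 'S_n) :
  interval_hypergraph I -> closed_under_intersection I ->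
  acyclic_orientation A -> acyclic_orientation B -> is_Or sA A -> is_Or sB B ->
  (forall a b : 'I_n, a < b -> pos sA b < pos sA a -> connect (vstep A) b a) ->
  (forall a b : 'I_n, a < b -> pos sB b < pos sB a -> connect (vstep B) b a) ->
  is_join (@weak_le n) (fun _ => True) sA sB rho ->
  is_join (@P_le n I) (@acyclic_orientation n I) A B (Orf A rho).
Proof.
move=> hI hC hA hB oA oB iA iB [_ [lA [lB lst]]].
have h0 := hA.1.
have EA : Orf A sA = A by apply: is_Or_uniq (is_Or_Orf _ h0) oA.
have EB : Orf A sB = B by apply: is_Or_uniq (is_Or_Orf _ h0) oB.
split; first exact: Or_acyclic (is_Or_Orf _ h0).
split; first by rewrite -{1}EA; apply: Or_mono.
split; first by rewrite -{1}EB; apply: Or_mono.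
move=> C hC' pAC pBC.
have [t [ot it]] := tau_ex hI hC'.
have EC : Orf A t = C by apply: is_Or_uniq (is_Or_Orf _ h0) ot.
rewrite -EC; apply: Or_mono => //; apply: lst => //.
  apply/weak_leP => a b ab hba; apply: it => //; apply/negP => rC.
  exact: claimK hI hC hA hC' (P_le_pointwise pAC) a b ab (iA _ _ ab hba) rC.
apply/weak_leP => a b ab hba; apply: it => //; apply/negP => rC.
exact: claimK hI hC hB hC' (P_le_pointwise pBC) a b ab (iB _ _ ab hba) rC.
Qed.

Lemma meet_main n (I : {set {set 'I_n}}) (A B : ori n I) (tA tB rho : 'S_n) :
  interval_hypergraph I -> closed_under_intersection I ->
  acyclic_orientation A -> acyclic_orientation B -> is_Or tA A -> is_Or tB B ->
  (forall a b : 'I_n, a < b -> ~~ connect (vstep A) a b -> pos tA b < pos tA a) ->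
  (forall a b : 'I_n, a < b -> ~~ connect (vstep B) a b -> pos tB b < pos tB a) ->
  is_meet (@weak_le n) (fun _ => True) tA tB rho ->
  is_meet (@P_le n I) (@acyclic_orientation n I) A B (Orf A rho).
Proof.
move=> hI hC hA hB oA oB iA iB [_ [lA [lB lst]]].
have h0 := hA.1.
have EA : Orf A tA = A by apply: is_Or_uniq (is_Or_Orf _ h0) oA.
have EB : Orf A tB = B by apply: is_Or_uniq (is_Or_Orf _ h0) oB.
split; first exact: Or_acyclic (is_Or_Orf _ h0).
split; first by rewrite -{2}EA; apply: Or_mono.
split; first by rewrite -EB; apply: Or_mono.
move=> C hC' pCA pCB.
have [s [os iss]] := sigma_ex hI hC'.
have EC : Orf A s = C by apply: is_Or_uniq (is_Or_Orf _ h0) os.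
rewrite -EC; apply: Or_mono => //; apply: lst => //.
  apply/weak_leP => a b ab hba; apply: iA => //; apply/negP => rA.
  exact: claimK hI hC hC' hA (P_le_pointwise pCA) a b ab (iss _ _ ab hba) rA.
apply/weak_leP => a b ab hba; apply: iB => //; apply/negP => rB.
exact: claimK hI hC hC' hB (P_le_pointwise pCB) a b ab (iss _ _ ab hba) rB.
Qed.

Lemma fiber_facts n (I : {set {set 'I_n}}) (A : ori n I) (sA tA : 'S_n) :
  interval_hypergraph I -> acyclic_orientation A ->
  (forall pi : 'S_n, is_Or pi A <-> weak_le sA pi /\ weak_le pi tA) ->
  [/\ is_Or sA A, is_Or tA A,
      (forall a b : 'I_n, a < b -> pos sA b < pos sA a -> connect (vstep A) b a) &
      (forall a b : 'I_n, a < b -> ~~ connect (vstep A) a b -> pos tA b < pos tA a)].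
Proof.
move=> hI hA F.
have [s [os iss]] := sigma_ex hI hA.
have [t [ot it]] := tau_ex hI hA.
have [s1 s2] := (F s).1 os.
have [t1 t2] := (F t).1 ot.
have st : weak_le sA tA by apply: weak_le_trans s1 s2.
split.
- by apply/F; split; [apply: weak_le_refl | ].
- by apply/F; split; [ | apply: weak_le_refl].
- by move=> a b ab h; apply: iss => //; move/weak_leP: s1; apply.
- by move=> a b ab h; move/weak_leP: t2; apply => //; apply: it.
Qed.

Theorem proposition4p11 (n : nat) (I : {set {set 'I_n}}) :
  interval_hypergraph I -> closed_under_intersection I ->
  (* P_I is a lattice *)
  ((forall A B : {ffun {H : {set 'I_n} | H \in I} -> 'I_n}, acyclic_orientation A -> acyclic_orientation B ->
      P_le A B -> P_le B A -> A = B) /\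
   (forall A B : {ffun {H : {set 'I_n} | H \in I} -> 'I_n}, acyclic_orientation A -> acyclic_orientation B ->
      (exists J, is_join (@P_le n I) (@acyclic_orientation n I) A B J) /\
      (exists M, is_meet (@P_le n I) (@acyclic_orientation n I) A B M))) /\
  (* join and meet formulas; sA, tA (resp. sB, tB) are the endpoints of the fibers *)
  (forall (A B : {ffun {H : {set 'I_n} | H \in I} -> 'I_n}) (sA tA sB tB : 'S_n),
      acyclic_orientation A -> acyclic_orientation B ->
      (forall pi : 'S_n, is_Or pi A <-> weak_le sA pi /\ weak_le pi tA) ->
      (forall pi : 'S_n, is_Or pi B <-> weak_le sB pi /\ weak_le pi tB) ->
      (exists rho : 'S_n, is_join (@weak_le n) (fun _ => True) sA sB rho /\
         exists J, is_Or rho J /\ is_join (@P_le n I) (@acyclic_orientation n I) A B J) /\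
      (exists rho : 'S_n, is_meet (@weak_le n) (fun _ => True) tA tB rho /\
         exists M, is_Or rho M /\ is_meet (@P_le n I) (@acyclic_orientation n I) A B M)).
Proof.
move=> hI hC; split; [split|].
- move=> A B _ _ h1 h2; apply/ffunP => e; apply: val_inj; apply/eqP.
  by rewrite eqn_leq (P_le_pointwise h1) (P_le_pointwise h2).
- move=> A B hA hB; split.
    have [s [os iss]] := sigma_ex hI hA.
    have [s' [os' iss']] := sigma_ex hI hB.
    have [rho hr] := wjoin_ex s s'.
    by exists (Orf A rho); apply: join_main hr.
  have [t [ot it]] := tau_ex hI hA.
  have [t' [ot' it']] := tau_ex hI hB.
  have [rho hr] := wmeet_ex t t'.
  by exists (Orf A rho); apply: meet_main hr.
move=> A B sA tA sB tB hA hB FA FB.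
have [osA otA isA itA] := fiber_facts hI hA FA.
have [osB otB isB itB] := fiber_facts hI hB FB.
split.
  have [rho hr] := wjoin_ex sA sB.
  exists rho; split => //; exists (Orf A rho); split; first exact: is_Or_Orf hA.1.
  exact: join_main hr.
have [rho hr] := wmeet_ex tA tB.
exists rho; split => //; exists (Orf A rho); split; first exact: is_Or_Orf hA.1.
exact: meet_main hr.
Qed.
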